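(* Let $n\ge1$, $m=\lfloor n/2\rfloor$, $\rho\in(0,1)$, $j\in\mathbb Z$, and let $k\le l$ be integers. If $Z^{j}_m[l]_n\le Z^{\rho,1}_m[k]_n$, then $$L_j[l]_n-L_j[k]_n\le L^{\rho,1}_m[l]_n-L^{\rho,1}_m[k]_n.$$ If $Z^{\rho,1}_m[l]_n\le Z^{j}_m[k]_n$, then $$L^{\rho,1}_m[l]_n-L^{\rho,1}_m[k]_n\le L_j[l]_n-L_j[k]_n.$$
   Context: Let $\omega=\{\omega_{i,j}:(i,j)\in\mathbb Z^2,\ i+j>0\}$ be i.i.d. exponential random variables with parameter $1$. Write $(i,j)\le(k,l)$ if $i\le k$ and $j\le l$. An up-right path from $\mathbf x$ to $\mathbf y$ is a sequence $\mathbf x=\mathbf x_0,\dots,\mathbf x_m=\mathbf y$ with increments in $\{(1,0),(0,1)\}$; its passage time is $\sum_{i=1}^m\omega_{\mathbf x_i}$ (starting point excluded). For $\mathbf x=(i,j)\le\mathbf y$ with $i+j\ge0$, $L(\mathbf x,\mathbf y)$ is the maximal passage time over up-right paths, and the geodesic from $\mathbf x$ to $\mathbf y$ is the (a.s. unique) path attaining it. For integer $k$, $[k]_n:=(n+k,n-k)$ and $L_k(\mathbf x):=L([k]_0,\mathbf x)$. For $\rho\in(0,1)$, let $\mathrm s^1_\rho$ be a stationary profile independent of $\omega$: $\mathrm s^1_\rho(0)=0$, $\mathrm s^1_\rho(k)=\sum_{i=1}^k\zeta_i$ ($k>0$), $\mathrm s^1_\rho(k)=-\sum_{i=k+1}^0\zeta_i$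 ($k<0$), with $\zeta_i$ i.i.d. copies of $E_1-E_2$, $E_1,E_2$ independent exponentials of rates $1-\rho$ and $\rho$. Define $L^{\rho,1}_m[k]_n:=\max\{\mathrm s^1_\rho(i)+L([i]_m,[k]_n): i\in\mathbb Z,\ [i]_m\le[k]_n\}$ and let $Z^{\rho,1}_m[k]_n$ be the largest maximizing $i$. For $j$ with $[j]_0\le[k]_n$, let $Z^j_m[k]_n$ be the integer $z$ such that $[z]_m$ is the point where the geodesic from $[j]_0$ to $[k]_n$ meets the anti-diagonal $\{(m+i,m-i):i\in\mathbb Z\}$. *)

(* Defs.v *)
From Stdlib Require Import Reals ZArith List Bool.
Import ListNotations.
Open Scope R_scope.

Definition pt := (Z * Z)%type.

(* [k]_n := (n+k, n-k) *)
Definition diag (n k : Z) : pt := ((n + k)%Z, (n - k)%Z).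

Definition le_pt (x y : pt) : Prop := (fst x <= fst y)%Z /\ (snd x <= snd y)%Z.
Definition le_ptb (x y : pt) : bool := (Z.leb (fst x) (fst y) && Z.leb (snd x) (snd y))%bool.
Definition pt_eqb (x y : pt) : bool := (Z.eqb (fst x) (fst y) && Z.eqb (snd x) (snd y))%bool.

(* An up-right path from x is encoded by its sequence of increments:
   true = (1,0), false = (0,1). *)
Definition step (p : pt) (b : bool) : pt :=
  if b then ((fst p + 1)%Z, snd p) else (fst p, (snd p + 1)%Z).

Fixpoint pts (p : pt) (bs : list bool) : list pt :=
  match bs with
  | [] => []
  | b :: bs' => step p b :: pts (step p b) bs'
  end.

Fixpoint endp (p : pt) (bs : list bool) : pt :=
  match bs with
  | [] => p
  | b :: bs' => endp (step p b) bs'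
  end.

(* passage time: sum of the weights of x_1..x_m (starting point excluded) *)
Definition weight (w : Z -> Z -> R) (p : pt) (bs : list bool) : R :=
  fold_right Rplus 0 (map (fun q => w (fst q) (snd q)) (pts p bs)).

Fixpoint all_bl (n : nat) : list (list bool) :=
  match n with
  | O => [[]]
  | S n' => map (cons true) (all_bl n') ++ map (cons false) (all_bl n')
  end.

(* all up-right paths from x to y (each has exactly (y1-x1)+(y2-x2) steps) *)
Definition up_right_paths (x y : pt) : list (list bool) :=
  filter (fun bs => pt_eqb (endp x bs) y)
         (all_bl (Z.to_nat ((fst y - fst x) + (snd y - snd x)))).

Definition list_max (l : list R) : R :=
  match l with [] => 0 | a :: l' => fold_right Rmax a l' end.

Definition list_maxZ (l : list Z) : Z :=
  match l with [] => 0%Z | a :: l' => fold_right Z.max a l' end.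

Definition L (w : Z -> Z -> R) (x y : pt) : R :=
  list_max (map (weight w x) (up_right_paths x y)).

Definition is_geodesic (w : Z -> Z -> R) (x y : pt) (bs : list bool) : Prop :=
  endp x bs = y /\ weight w x bs = L w x y.

Definition Lj (w : Z -> Z -> R) (j : Z) (x : pt) : R := L w (diag 0 j) x.

Definition zrange (a b : Z) : list Z :=
  map (fun t => (a + Z.of_nat t)%Z) (seq 0 (Z.to_nat (b - a + 1))).

(* the integers i with [i]_m <= [k]_n (all lie in k-(n-m) .. k+(n-m)) *)
Definition feasible (m n k : Z) : list Z :=
  filter (fun i => le_ptb (diag m i) (diag n k))
         (zrange (k - (n - m))%Z (k + (n - m))%Z).

Definition Rrho_val (w : Z -> Z -> R) (s : Z -> R) (m n k i : Z) : R :=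
  s i + L w (diag m i) (diag n k).

(* L^{rho,1}_m[k]_n = max { s(i) + L([i]_m,[k]_n) : [i]_m <= [k]_n } *)
Definition Lrho (w : Z -> Z -> R) (s : Z -> R) (m n k : Z) : R :=
  list_max (map (Rrho_val w s m n k) (feasible m n k)).

Definition Reqb (a b : R) : bool := if Req_EM_T a b then true else false.

(* Z^{rho,1}_m[k]_n : the largest maximizing i *)
Definition Zrho (w : Z -> Z -> R) (s : Z -> R) (m n k : Z) : Z :=
  list_maxZ (filter (fun i => Reqb (Rrho_val w s m n k i) (Lrho w s m n k))
                    (feasible m n k)).

(* Main.v *)
Require Import Defs.
From Stdlib Require Import Reals ZArith List Lia Lra Bool.
Import ListNotations.
Open Scope R_scope.

Lemma endp_app x a b : endp x (a ++ b) = endp (endp x a) b.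
Proof. revert x; induction a; intros x; simpl; auto. Qed.

Lemma weight_app w x a b : weight w x (a ++ b) = weight w x a + weight w (endp x a) b.
Proof.
  revert x; induction a; intros x; unfold weight in *; simpl.
  - ring.
  - rewrite IHa. ring.
Qed.

Lemma endp_sum p bs : (fst (endp p bs) + snd (endp p bs) = fst p + snd p + Z.of_nat (length bs))%Z.
Proof.
  revert p; induction bs as [|b bs IH]; intros p; simpl.
  - lia.
  - rewrite IH. destruct b; simpl; lia.
Qed.

Lemma endp_mono p bs : le_pt p (endp p bs).
Proof.
  revert p; induction bs as [|b bs IH]; intros p; simpl.
  - unfold le_pt; lia.
  - specialize (IH (step p b)). unfold le_pt in *. destruct b; simpl in *; lia.
Qed.

Lemma le_pt_trans x y z : le_pt x y -> le_pt y z -> le_pt x z.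
Proof. unfold le_pt; lia. Qed.

Lemma split_path q x bs : In q (x :: pts x bs) -> exists a b, bs = a ++ b /\ endp x a = q.
Proof.
  revert x; induction bs as [|c r IH]; intros x H; simpl in H.
  - destruct H as [H|[]]. exists [], []. auto.
  - destruct H as [H|H].
    + exists [], (c :: r). auto.
    + destruct (IH (step x c) H) as [a [b [H1 H2]]].
      exists (c :: a), b. subst. simpl. auto.
Qed.

Lemma cross : forall bs1 p1 p2 bs2,
  (fst p1 + snd p1 = fst p2 + snd p2)%Z -> (fst p1 <= fst p2)%Z ->
  (fst (endp p1 bs1) + snd (endp p1 bs1) = fst (endp p2 bs2) + snd (endp p2 bs2))%Z ->
  (fst (endp p2 bs2) <= fst (endp p1 bs1))%Z ->
  exists a1 b1 a2 b2, bs1 = a1 ++ b1 /\ bs2 = a2 ++ b2 /\ endp p1 a1 = endp p2 a2.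
Proof.
  induction bs1 as [|b bs1 IH]; intros p1 p2 bs2 H1 H2 H3 H4.
  - destruct (Z.eq_dec (fst p1) (fst p2)) as [e|ne].
    + exists [], [], [], bs2. split; [reflexivity|split;[reflexivity|]].
      simpl; destruct p1, p2; simpl in *; f_equal; lia.
    + pose proof (endp_sum p2 bs2) as E2.
      destruct bs2 as [|c bs2]; simpl in *; lia.
  - destruct (Z.eq_dec (fst p1) (fst p2)) as [e|ne].
    + exists [], (b :: bs1), [], bs2. split; [reflexivity|split;[reflexivity|]].
      simpl; destruct p1, p2; simpl in *; f_equal; lia.
    + pose proof (endp_sum p1 (b :: bs1)) as E1.
      pose proof (endp_sum p2 bs2) as E2.
      destruct bs2 as [|c bs2]; [simpl in *; lia|].
      simpl in H3, H4.
      destruct (IH (step p1 b) (step p2 c) bs2) as [a1 [b1 [a2 [b2 [A [B C]]]]]];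
        auto.
      * destruct b, c; simpl; lia.
      * destruct b, c; simpl; lia.
      * exists (b :: a1), b1, (c :: a2), b2. subst. simpl. auto.
Qed.

Lemma pt_eqb_iff p q : pt_eqb p q = true <-> p = q.
Proof.
  destruct p, q; unfold pt_eqb; simpl. rewrite andb_true_iff, !Z.eqb_eq.
  split; [intros [-> ->]; auto | intros H; inversion H; auto].
Qed.

Lemma all_bl_in bs : In bs (all_bl (length bs)).
Proof.
  induction bs as [|b bs IH]; simpl; auto.
  apply in_or_app. destruct b; [left|right]; apply in_map; auto.
Qed.

Lemma list_max_ge a l y : In y (a :: l) -> y <= fold_right Rmax a l.
Proof.
  induction l as [|c l IH]; simpl; intros H.
  - destruct H as [->|[]]; lra.
  - destruct H as [->|[->|H]].
    + eapply Rle_trans; [apply IH; simpl; auto|apply Rmax_r].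
    + apply Rmax_l.
    + eapply Rle_trans; [apply IH; simpl; auto|apply Rmax_r].
Qed.

Lemma list_max_in a l : In (fold_right Rmax a l) (a :: l).
Proof.
  induction l as [|c l IH]; simpl; auto.
  destruct (Rle_dec c (fold_right Rmax a l)).
  - rewrite Rmax_right by lra. simpl in IH |- *. tauto.
  - rewrite Rmax_left by lra. simpl; tauto.
Qed.

Lemma list_maxZ_in a l : In (fold_right Z.max a l) (a :: l).
Proof.
  induction l as [|c l IH]; simpl; auto.
  destruct (Z.max_dec c (fold_right Z.max a l)) as [e|e]; rewrite e; simpl in *; tauto.
Qed.

Lemma lmax_ge l y : In y l -> y <= Defs.list_max l.
Proof. destruct l; [intros []|]. apply list_max_ge. Qed.

Lemma lmax_in l : l <> [] -> In (Defs.list_max l) l.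
Proof. destruct l; [congruence|]. intros _. apply list_max_in. Qed.

Lemma L_ge w x y bs : endp x bs = y -> weight w x bs <= L w x y.
Proof.
  intros H. unfold L. apply lmax_ge. apply in_map. unfold up_right_paths.
  apply filter_In. split.
  - pose proof (endp_sum x bs) as E. rewrite H in E.
    replace (Z.to_nat (fst y - fst x + (snd y - snd x))) with (length bs) by lia.
    apply all_bl_in.
  - apply pt_eqb_iff; auto.
Qed.

Lemma endp_true n x : endp x (repeat true n) = (fst x + Z.of_nat n, snd x)%Z.
Proof.
  revert x; induction n; intros x; simpl.
  - destruct x; simpl; f_equal; lia.
  - rewrite IHn. simpl. f_equal. lia.
Qed.

Lemma endp_false n x : endp x (repeat false n) = (fst x, snd x + Z.of_nat n)%Z.
Proof.
  revert x; induction n; intros x; simpl.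
  - destruct x; simpl; f_equal; lia.
  - rewrite IHn. simpl. f_equal. lia.
Qed.

Lemma path_exists x y : le_pt x y -> exists bs, endp x bs = y.
Proof.
  intros [H1 H2].
  exists (repeat true (Z.to_nat (fst y - fst x)) ++ repeat false (Z.to_nat (snd y - snd x))).
  rewrite endp_app, endp_true, endp_false. simpl. destruct y; simpl in *. f_equal; lia.
Qed.

Lemma L_attained w x y : le_pt x y -> exists bs, endp x bs = y /\ weight w x bs = L w x y.
Proof.
  intros H. destruct (path_exists x y H) as [bs0 H0].
  assert (Hn : map (weight w x) (up_right_paths x y) <> []).
  { intros E. assert (In (weight w x bs0) (map (weight w x) (up_right_paths x y))).
    2: rewrite E in H1; destruct H1.
    apply in_map. unfold up_right_paths. apply filter_In. split.
    - pose proof (endp_sum x bs0) as E'. rewrite H0 in E'.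
      replace (Z.to_nat (fst y - fst x + (snd y - snd x))) with (length bs0) by lia.
      apply all_bl_in.
    - apply pt_eqb_iff; auto. }
  pose proof (lmax_in _ Hn) as Hi. apply in_map_iff in Hi.
  destruct Hi as [bs [Hw Hi]]. unfold up_right_paths in Hi.
  apply filter_In in Hi. destruct Hi as [_ Hi]. apply pt_eqb_iff in Hi.
  exists bs. split; auto.
Qed.

Lemma zrange_iff a b i : In i (zrange a b) <-> (a <= i <= b)%Z.
Proof.
  unfold zrange. rewrite in_map_iff. split.
  - intros [t [<- Ht]]. apply in_seq in Ht. lia.
  - intros H. exists (Z.to_nat (i - a)). split; [lia|]. apply in_seq. lia.
Qed.

Lemma feasible_iff m n k i : In i (feasible m n k) <-> le_pt (diag m i) (diag n k).
Proof.
  unfold feasible. rewrite filter_In, zrange_iff. unfold le_ptb, le_pt, diag; simpl.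
  rewrite andb_true_iff, !Z.leb_le. lia.
Qed.

Lemma Lrho_ge w s m n k i : In i (feasible m n k) -> Rrho_val w s m n k i <= Lrho w s m n k.
Proof. intros H. unfold Lrho. apply lmax_ge. apply in_map. auto. Qed.

Lemma Reqb_true a b : Reqb a b = true <-> a = b.
Proof. unfold Reqb. destruct (Req_EM_T a b); split; congruence. Qed.

Lemma Zrho_spec w s m n k : feasible m n k <> [] ->
  In (Zrho w s m n k) (feasible m n k) /\ Rrho_val w s m n k (Zrho w s m n k) = Lrho w s m n k.
Proof.
  intros H.
  assert (Hn : map (Rrho_val w s m n k) (feasible m n k) <> []).
  { destruct (feasible m n k); simpl; congruence. }
  pose proof (lmax_in _ Hn) as Hi. apply in_map_iff in Hi. destruct Hi as [i [Hi1 Hi2]].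
  set (F := filter (fun i => Reqb (Rrho_val w s m n k i) (Lrho w s m n k)) (feasible m n k)).
  assert (HF : In i F). { apply filter_In. split; auto. apply Reqb_true. auto. }
  assert (HZ : In (Zrho w s m n k) F).
  { unfold Zrho. fold F. destruct F as [|a l]; [destruct HF|]. apply list_maxZ_in. }
  apply filter_In in HZ. destruct HZ as [HZ1 HZ2]. apply Reqb_true in HZ2. auto.
Qed.

Lemma feasible_ne m n k : (0 <= m <= n)%Z -> feasible m n k <> [].
Proof.
  intros H E. assert (In k (feasible m n k)) as Hk.
  { apply feasible_iff. unfold le_pt, diag; simpl; lia. }
  rewrite E in Hk; destruct Hk.
Qed.

Theorem lemma7 (w : Z -> Z -> R) (s : Z -> R) (hs0 : s 0%Z = 0)
  (n : Z) (hn : (1 <= n)%Z) (j k l : Z) (hkl : (k <= l)%Z)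
  (hjk : le_pt (diag 0 j) (diag n k)) (hjl : le_pt (diag 0 j) (diag n l)) :
  let m := (n / 2)%Z in
  (forall (bs : list bool) (z : Z),
      is_geodesic w (diag 0 j) (diag n l) bs ->
      (forall bs', is_geodesic w (diag 0 j) (diag n l) bs' -> bs' = bs) ->
      In (diag m z) (diag 0 j :: pts (diag 0 j) bs) ->
      (z <= Zrho w s m n k)%Z ->
      Lj w j (diag n l) - Lj w j (diag n k) <= Lrho w s m n l - Lrho w s m n k)
  /\
  (forall (bs : list bool) (z : Z),
      is_geodesic w (diag 0 j) (diag n k) bs ->
      (forall bs', is_geodesic w (diag 0 j) (diag n k) bs' -> bs' = bs) ->
      In (diag m z) (diag 0 j :: pts (diag 0 j) bs) ->
      (Zrho w s m n l <= z)%Z ->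
      Lrho w s m n l - Lrho w s m n k <= Lj w j (diag n l) - Lj w j (diag n k)).
Proof.
  intros m.
  assert (Hm : (0 <= m <= n)%Z) by (unfold m; split; [apply Z.div_pos|apply Z.div_le_upper_bound]; lia).
  split.
  - intros bs z [Hend Hw] _ Hin Hz.
    destruct (split_path _ _ _ Hin) as [a [r [Hbs Ha]]].
    destruct (Zrho_spec w s m n k (feasible_ne m n k Hm)) as [HZf HZv].
    set (Zk := Zrho w s m n k) in *.
    pose proof HZf as HZle. apply feasible_iff in HZle.
    destruct (L_attained w _ _ HZle) as [p2 [Hp2e Hp2w]].
    assert (Hr : endp (diag m z) r = diag n l) by (rewrite <- Ha, <- endp_app, <- Hbs; auto).
    destruct (cross r (diag m z) (diag m Zk) p2) as [a1 [b1 [a2 [b2 [E1 [E2 E3]]]]]].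
    + simpl; lia.
    + simpl; lia.
    + rewrite Hr, Hp2e; simpl; lia.
    + rewrite Hr, Hp2e; simpl; lia.
    + set (v := endp (diag m z) a1) in *.
      assert (Hb1 : endp v b1 = diag n l) by (unfold v; rewrite <- endp_app, <- E1; auto).
      assert (Hb2 : endp v b2 = diag n k) by (rewrite E3, <- endp_app, <- E2; auto).
      assert (X1 : Lj w j (diag n l) = weight w (diag 0 j) a + weight w (diag m z) a1 + weight w v b1).
      { unfold Lj. rewrite <- Hw, Hbs, E1, !weight_app, Ha. fold v. ring. }
      assert (X2 : weight w (diag 0 j) (a ++ a1 ++ b2) <= Lj w j (diag n k)).
      { unfold Lj. apply L_ge. rewrite !endp_app, Ha. fold v. auto. }
      rewrite !weight_app, Ha in X2. fold v in X2.
      assert (X3 : Lrho w s m n k = s Zk + weight w (diag m Zk) a2 + weight w v b2).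
      { rewrite <- HZv. unfold Rrho_val. rewrite <- Hp2w, E2, weight_app, <- E3. ring. }
      assert (Hfl : In Zk (feasible m n l)).
      { apply feasible_iff. rewrite <- Hb1, E3, <- endp_app. apply endp_mono. }
      assert (X4 := Lrho_ge w s m n l Zk Hfl). unfold Rrho_val in X4.
      assert (X5 : weight w (diag m Zk) (a2 ++ b1) <= L w (diag m Zk) (diag n l)).
      { apply L_ge. rewrite endp_app, <- E3. auto. }
      rewrite weight_app, <- E3 in X5. fold v in X5.
      lra.
  - intros bs z [Hend Hw] _ Hin Hz.
    destruct (split_path _ _ _ Hin) as [a [r [Hbs Ha]]].
    destruct (Zrho_spec w s m n l (feasible_ne m n l Hm)) as [HZf HZv].
    set (Zl := Zrho w s m n l) in *.
    pose proof HZf as HZle. apply feasible_iff in HZle.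
    destruct (L_attained w _ _ HZle) as [p2 [Hp2e Hp2w]].
    assert (Hr : endp (diag m z) r = diag n k) by (rewrite <- Ha, <- endp_app, <- Hbs; auto).
    destruct (cross p2 (diag m Zl) (diag m z) r) as [a1 [b1 [a2 [b2 [E1 [E2 E3]]]]]].
    + simpl; lia.
    + simpl; lia.
    + rewrite Hr, Hp2e; simpl; lia.
    + rewrite Hr, Hp2e; simpl; lia.
    + set (v := endp (diag m Zl) a1) in *.
      assert (Hb1 : endp v b1 = diag n l) by (unfold v; rewrite <- endp_app, <- E1; auto).
      assert (Hb2 : endp v b2 = diag n k) by (rewrite E3, <- endp_app, <- E2; auto).
      assert (X1 : Lj w j (diag n k) = weight w (diag 0 j) a + weight w (diag m z) a2 + weight w v b2).
      { unfold Lj. rewrite <- Hw, Hbs, E2, !weight_app, Ha, <- E3. ring. }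
      assert (X2 : weight w (diag 0 j) (a ++ a2 ++ b1) <= Lj w j (diag n l)).
      { unfold Lj. apply L_ge. rewrite !endp_app, Ha, <- E3. auto. }
      rewrite !weight_app, Ha, <- E3 in X2.
      assert (X3 : Lrho w s m n l = s Zl + weight w (diag m Zl) a1 + weight w v b1).
      { rewrite <- HZv. unfold Rrho_val. rewrite <- Hp2w, E1, weight_app. fold v. ring. }
      assert (Hfk : In Zl (feasible m n k)).
      { apply feasible_iff. rewrite <- Hb2. unfold v. rewrite <- endp_app. apply endp_mono. }
      assert (X4 := Lrho_ge w s m n k Zl Hfk). unfold Rrho_val in X4.
      assert (X5 : weight w (diag m Zl) (a1 ++ b2) <= L w (diag m Zl) (diag n k)).
      { apply L_ge. rewrite endp_app. fold v. auto. }
      rewrite weight_app in X5. fold v in X5.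
      lra.
Qed.
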